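(* Let $m$ be a prime power and let $l,s,t$ be positive integers such that $m\geq l-1$ and $2t-1\leq l$. Define $q=(s-1)m+1$. If there exists an $OA(t,l,s)$, then there exists a $q$-ary $c$-frameproof code of length $l$ and cardinality $\frac{s^t-1}{(s-1)^t}(q-1)^t$, for every integer $c\geq t$ such that $l=c(t-1)+r$ for some $r\in\{t,t+1,\ldots,c\}$.
   Context: An $OA(t,l,s)$ (orthogonal array of strength $t$, with $l$ constraints, $s\geq 2$ levels and index $1$) is an $l\times s^t$ array with entries from a set of $s$ symbols such that in every $t\times s^t$ subarray (choice of $t$ rows), every $t\times 1$ column vector over the symbol set appears exactly once. For $P\subseteq F^l$ over a finite alphabet $F$, $desc(P)=\{x\in F^l: \text{for every } i \text{ there is } y\in P \text{ with } x_i=y_i\}$. For an integer $c\geq 2$, a $c$-frameproof code of length $l$ is a subset $C\subseteq F^l$ with $desc(P)\cap C=P$ for every $P\subseteq C$ with $|P|\leq c$; it is $q$-ary if $|F|=q$. *)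

(* Defs.v *)
From mathcomp Require Import all_boot all_order all_algebra.
Set Implicit Arguments. Unset Strict Implicit. Unset Printing Implicit Defensive.

(* Orthogonal array OA(t,l,s) of index 1: an l x s^t array A (row i, column j
   entry A i j) over the s-symbol set 'I_s, such that for every choice of t
   distinct rows (given as an injective map r : 'I_t -> 'I_l) every column
   vector v over the symbols appears exactly once among the columns. *)
Definition is_OA (t l s : nat) (A : 'I_l -> 'I_(s ^ t) -> 'I_s) : Prop :=
  forall r : 'I_t -> 'I_l, injective r ->
  forall v : 'I_t -> 'I_s,
    #|[set j : 'I_(s ^ t) | [forall k : 'I_t, A (r k) j == v k]]| = 1%N.

Definition exists_OA (t l s : nat) : Prop :=
  (2 <= s)%N /\ exists A : 'I_l -> 'I_(s ^ t) -> 'I_s, is_OA A.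

Definition desc (F : finType) (l : nat) (P : {set {ffun 'I_l -> F}})
  : {set {ffun 'I_l -> F}} :=
  [set x : {ffun 'I_l -> F} | [forall i : 'I_l, [exists y in P, x i == y i]]].

Definition frameproof (F : finType) (l c : nat) (C : {set {ffun 'I_l -> F}})
  : Prop :=
  forall P : {set {ffun 'I_l -> F}},
    P \subset C -> (#|P| <= c)%N -> desc P :&: C = P.

Definition prime_power (m : nat) : Prop :=
  exists p k : nat, prime p /\ (0 < k)%N /\ m = (p ^ k)%N.

(* Main.v *)
Require Import Defs.
From mathcomp Require Import all_boot all_order all_algebra all_field.
From mathcomp Require Import zify.
Import GRing.Theory Num.Theory.
Set Implicit Arguments. Unset Strict Implicit. Unset Printing Implicit Defensive.

Section OA.
Variables (t' l s : nat) (A : 'I_l -> 'I_(s ^ t'.+1) -> 'I_s).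
Hypothesis HA : is_OA A.
Lemma oa_agree j j' : j != j' -> #|[set i | A i j == A i j']| <= t'.
Proof.
move=> njj; rewrite leqNgt; apply/negP => H.
set S := [set i | A i j == A i j'] in H.
pose r (k : 'I_t'.+1) : 'I_l := enum_val (widen_ord H k).
have r_inj : injective r.
  by move=> k1 k2 /enum_val_inj /(congr1 val) /= /val_inj.
have rS k : r k \in S by apply: enum_valP.
have := HA r_inj (fun k => A (r k) j).
move/eqP/cards1P => [x hx].
have hj : j \in [set x] by rewrite -hx inE; apply/forallP => k.
have hj' : j' \in [set x].
  rewrite -hx inE; apply/forallP => k; have := rS k; rewrite inE eq_sym //.
move: hj hj'; rewrite !inE => /eqP ej /eqP ej'; by rewrite ej ej' eqxx in njj.
Qed.
End OA.

Section RS.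
Local Open Scope ring_scope.
Variables (F : finFieldType) (t' l' : nat) (al : nat -> F).
Hypothesis al_inj : forall i j, (i < l')%N -> (j < l')%N -> al i = al j -> i = j.
Definition pf (f : {ffun 'I_t'.+1 -> F}) : {poly F} := \poly_(k < t'.+1) f (inord k).
Definition rs (f : {ffun 'I_t'.+1 -> F}) (i : 'I_l'.+1) : F :=
  if i == ord_max then f ord_max else (pf f).[al i].

Lemma rs_agree f f' : f != f' -> (#|[set i | rs f i == rs f' i]| <= t')%N.
Proof.
move=> nff.
pose p := \poly_(k < t'.+1) (f (inord k) - f' (inord k)).
have pE : pf f - pf f' = p.
  by apply/polyP => k; rewrite coefB !coef_poly; case: ifP => // _; rewrite subr0.
have pcoef (k : 'I_t'.+1) : p`_k = f k - f' k by rewrite coef_poly ltn_ord inord_val.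
have pn0 : p != 0.
  apply: contra nff => /eqP p0; apply/eqP/ffunP => k; apply/eqP.
  by rewrite -subr_eq0 -pcoef p0 coef0.
have lt (i : 'I_l'.+1) : i != ord_max -> (i < l')%N.
  move=> ni; rewrite ltn_neqAle -ltnS ltn_ord andbT; apply: contra ni => /eqP e.
  by apply/eqP/val_inj.
set S := [set i | rs f i == rs f' i].
set S1 := [set i : 'I_l'.+1 | (i != ord_max) && (rs f i == rs f' i)].
have S1lt : (#|S1| < size p)%N.
  rewrite cardE -(size_map (fun i : 'I_l'.+1 => al i)).
  apply: max_poly_roots => //.
    apply/allP => x /mapP [i]; rewrite mem_enum inE => /andP [ni /eqP] + ->.
    rewrite /rs (negbTE ni) => e; by rewrite /root -pE !hornerE e subrr.
  rewrite map_inj_in_uniq ?enum_uniq // => i j; rewrite !mem_enum !inE.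
  move=> /andP[ni _] /andP[nj _] e; apply/val_inj; apply: al_inj => //; by apply: lt.
have szp : (size p <= t'.+1)%N := size_poly _ _.
case: (eqVneq (p`_t') 0) => [pt0|ptn0].
  have szp' : (size p <= t')%N.
    apply/leq_sizeP => k; rewrite leq_eqVlt => /orP [/eqP <- //| kt].
    by move/leq_sizeP: szp; apply.
  have : S \subset ord_max |: S1.
    apply/subsetP => i; rewrite !inE; by case: (i == ord_max).
  move/subset_leq_card; rewrite cardsU1 => h.
  have := leq_b1 (ord_max \notin S1); lia.
have : S \subset S1.
  apply/subsetP => i; rewrite !inE; case: (eqVneq i ord_max) => //= ->; rewrite /rs eqxx => /eqP e.
  move: ptn0; have := pcoef ord_max; rewrite /= => ->.
  by rewrite e subrr eqxx.
move/subset_leq_card; lia.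
Qed.
End RS.

Lemma dec_nat m b b' e e' : (e < m)%N -> (e' < m)%N -> (b * m + e = b' * m + e')%N ->
  b = b' /\ e = e'.
Proof.
move=> he he' h.
have m0 : (0 < m)%N by lia.
have h1 : ((b * m + e) %/ m = b)%N by rewrite divnMDl // divn_small // addn0.
have h2 : ((b * m + e) %% m = e)%N by rewrite modnMDl modn_small.
have h1' : ((b' * m + e') %/ m = b')%N by rewrite divnMDl // divn_small // addn0.
have h2' : ((b' * m + e') %% m = e')%N by rewrite modnMDl modn_small.
by split; [rewrite -h1 h h1' | rewrite -h2 h h2'].
Qed.

Section Main.
Variables (l' t' s m : nat) (F : finFieldType) (A : 'I_l'.+1 -> 'I_(s ^ t'.+1) -> 'I_s)
  (j0 : 'I_(s ^ t'.+1)) (al : nat -> F).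
Hypothesis Fm : #|F| = m.
Hypothesis s2 : (2 <= s)%N.
Hypothesis HA : is_OA A.
Hypothesis al_inj : forall i j, (i < l')%N -> (j < l')%N -> al i = al j -> i = j.

Definition ew (x : F) : nat := enum_rank x.

Lemma ew_lt x : (ew x < m)%N.
Proof. by rewrite /ew -Fm; apply: ltn_ord. Qed.

Lemma ew_inj : injective ew.
Proof. by move=> x y /val_inj /enum_rank_inj. Qed.

Definition symn i j (f : {ffun 'I_t'.+1 -> F}) : nat :=
  if A i j == A i j0 then 0
  else ((if (A i j0 < A i j)%N then (A i j).-1 else A i j) * m + ew (rs al f i) + 1)%N.

Lemma symn_lt i j f : (symn i j f < (s - 1) * m + 1)%N.
Proof.
rewrite /symn; case: eqP => e1; first by rewrite addn1.
set b := (if _ then _ else _).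
have hb : (b <= s - 2)%N.
  have h1 := ltn_ord (A i j); have h2 := ltn_ord (A i j0).
  have n1 : (A i j : nat) <> A i j0 by move=> h; apply e1; apply/val_inj.
  rewrite /b; case: ltnP; lia.
have := leq_mul hb (leqnn m); have := ew_lt (rs al f i).
have -> : ((s - 1) * m = (s - 2) * m + m)%N.
  by rewrite -[in LHS](subnK (_ : 1 <= s - 1)%N) ?mulnDl ?mul1n; [congr (_ * _ + _)%N; lia | lia].
lia.
Qed.

Lemma symn_eq i j j' f f' : symn i j f = symn i j' f' ->
  A i j = A i j' /\ (A i j != A i j0 -> rs al f i = rs al f' i).
Proof.
rewrite /symn; case: eqP => e1; case: eqP => e2 //.
- by move=> _; split; [rewrite e1 e2 |].
- by rewrite addn1.
- by rewrite addn1.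
move/eqP; rewrite eqn_add2r => /eqP /dec_nat [] //; try exact: ew_lt.
move=> hb /ew_inj he; split => //.
have h1 := ltn_ord (A i j); have h2 := ltn_ord (A i j0).
have n1 : (A i j : nat) <> A i j0 by move=> h; apply e1; apply/val_inj.
have n2 : (A i j' : nat) <> A i j0 by move=> h; apply e2; apply/val_inj.
apply: ord_inj; move: hb; case: (ltnP (A i j0) (A i j)); case: (ltnP (A i j0) (A i j')); lia.
Qed.

Definition word (q0 : 'I_((s - 1) * m + 1)) (p : 'I_(s ^ t'.+1) * {ffun 'I_t'.+1 -> F}) :
  {ffun 'I_l'.+1 -> 'I_((s - 1) * m + 1)} := [ffun i => insubd q0 (symn i p.1 p.2)].

Lemma word_eq q0 p p' i :
  (word q0 p i == word q0 p' i) = (symn i p.1 p.2 == symn i p'.1 p'.2).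
Proof. by rewrite !ffunE -val_eqE !val_insubd !symn_lt. Qed.

Definition Z j := [set i | A i j == A i j0].

Lemma Z_bound j : j != j0 -> (#|Z j| <= t')%N.
Proof. exact: oa_agree. Qed.

Lemma agree_bound q0 p p' : p != p' ->
  (#|[set i | word q0 p i == word q0 p' i] :\: Z p.1| <= t')%N.
Proof.
case: p p' => j f [j' f'] /= npp.
case: (eqVneq j j') => [ejj|njj].
  subst j'. have nff : f != f' by apply: contra npp => /eqP ->.
  apply: leq_trans (rs_agree al_inj nff). apply: subset_leq_card; apply/subsetP => i.
  rewrite !inE word_eq /= => /andP [nz /eqP e]. have [_ h] := symn_eq e. by rewrite h.
apply: leq_trans (oa_agree HA njj). apply: subset_leq_card; apply/subsetP => i.
rewrite !inE word_eq /= => /andP [_ /eqP e]. have [h _] := symn_eq e. by rewrite h.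
Qed.

End Main.
Unset Implicit Arguments.

Theorem lemma7 (m l s t : nat) :
  prime_power m -> (0 < l)%N -> (0 < s)%N -> (0 < t)%N ->
  (l - 1 <= m)%N -> (2 * t - 1 <= l)%N ->
  exists_OA t l s ->
  forall c : nat, (2 <= c)%N -> (t <= c)%N ->
  (exists r : nat, [/\ (t <= r)%N, (r <= c)%N & l = (c * (t - 1) + r)%N]) ->
  let q := ((s - 1) * m + 1)%N in
  exists C : {set {ffun 'I_l -> 'I_q}},
    frameproof c C /\
    (#|C|%:R : rat) = ((s ^ t - 1)%:R / ((s - 1) ^ t)%:R * ((q - 1) ^ t)%:R)%R.
Proof.
move=> [p [k [pp [kp em]]]] hl hs ht hlm hlt [s2 [A HA]] c hc htc [r [hr1 hr2 hlr]] q.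
destruct t as [|t']; first by [].
destruct l as [|l']; first by [].
have [F _ Fm] := pPrimePowerField pp kp.
rewrite -em in Fm.
pose al (i : nat) : F := nth 0%R (enum F) i.
have al_inj : forall i j, (i < l')%N -> (j < l')%N -> al i = al j -> i = j.
  move=> i j hi hj /eqP; rewrite /al nth_uniq ?enum_uniq -?cardE ?Fm //; [by move/eqP| lia | lia].
have j0 : 'I_(s ^ t'.+1) by exists 0%N; rewrite expn_gt0; lia.
have q0 : 'I_q by exists 0%N; rewrite /q addn1.
pose D := [set p : 'I_(s ^ t'.+1) * {ffun 'I_t'.+1 -> F} | p.1 != j0].
pose wd := word A j0 al q0.
exists (wd @: D).
have winj : {in D &, injective wd}.
  move=> [j f] [j' f'] hD _ e; apply/eqP; apply/negP => /negP npp.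
  have := agree_bound (A:=A) j0 (al:=al) Fm s2 HA al_inj q0 npp.
  have -> : [set i | wd (j, f) i == wd (j', f') i] = setT.
    by apply/setP => i; rewrite !inE e eqxx.
  rewrite setTD; have := cardsC (Z A j0 j); rewrite card_ord.
  have := Z_bound (A:=A) (j0:=j0) HA (j := j); rewrite inE in hD; move/(_ hD) => /=.
  lia.
split.
  move=> P PC Pc; apply/setP => x; rewrite inE.
  apply/andP/idP => [[xd xC]|xP]; last first.
    split; last by apply: (subsetP PC).
    by rewrite inE; apply/forallP => i; apply/existsP; exists x; rewrite xP eqxx.
  apply/negPn/negP => xP.
  case/imsetP: xC => [[j f] pD ex].
  pose B y := [set i | x i == y i] :\: Z A j0 j.
  have cov : [set: 'I_l'.+1] \subset Z A j0 j :|: \bigcup_(y in P) B y.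
    apply/subsetP => i _; rewrite inE.
    case: (boolP (i \in Z A j0 j)) => //= iZ.
    move: xd; rewrite inE => /forallP /(_ i) /existsP [y /andP [yP /eqP e]].
    by apply/bigcupP; exists y => //; rewrite /B in_setD iZ inE e eqxx.
  have hB y : y \in P -> (#|B y| <= t')%N.
    move=> yP; case/imsetP: (subsetP PC y yP) => [[j' f'] pD' ey].
    have npp : (j, f) != (j', f') by apply: contraNneq xP => e; rewrite ex e -ey.
    have := agree_bound (A:=A) j0 (al:=al) Fm s2 HA al_inj q0 npp.
    by rewrite /B ex ey.
  have hU : (#|\bigcup_(y in P) B y| <= #|P| * t')%N.
    rewrite -sum_nat_const.
    apply: (big_ind2 (fun (U : {set _}) n => #|U| <= n)%N) => //.
      by rewrite cards0.
      move=> U1 n1 U2 n2 h1 h2; apply: leq_trans (leq_card_setU _ _) _; lia.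
  have hZ : (#|Z A j0 j| <= t')%N by apply: Z_bound; rewrite inE in pD.
  have := subset_leq_card cov; rewrite cardsT card_ord => h.
  have := leq_trans h (leq_card_setU _ _).
  have := leq_mul Pc (leqnn t').
  have e1 : (l'.+1 = c * t' + r)%N by rewrite [LHS]hlr subn1.
  move=> e2 e3.
  have e4 : (l' < t' + #|P| * t')%N by apply: leq_trans e3 _; apply: leq_add.
  lia.
rewrite card_in_imset //.
have -> : D = setX [set~ j0] setT by apply/setP => -[a b]; rewrite !inE andbT.
rewrite cardsX cardsC1 cardsT card_ffun !card_ord Fm.
have -> : (q - 1 = (s - 1) * m)%N by rewrite /q addnK.
rewrite expnMn !natrM mulrA divfK; last by rewrite pnatr_eq0 expn_eq0; lia.
by rewrite subn1.
Qed.
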